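(* Let $\kappa\ge3$, $n\ge1$, $r,r'$, $F$, the $n$-periodic sequences $p,q$ and the $Y$-system solution $Y_{i,j,k}$ (for $i+j+k$ even) with the initial conditions $Y_{i,j,-1}=(q_{((\kappa-2)i+\kappa j+r-r')/2})^{-1}$ ($i+j$ odd) and $Y_{i,j,0}=p_{((\kappa-2)i+\kappa j)/2}$ ($i+j$ even) be as described in the context. Then $Y$ is doubly periodic: $$Y_{i,j,k}=Y_{(i,j,k)+\alpha(\kappa,2-\kappa,0)+\beta(n,-n,0)}$$ for all $(i,j,k)$ with $i+j+k\equiv0\bmod 2$ and all $\alpha,\beta\in\mathbb Z$.
   Context: $\kappa\ge 3$ and $n\ge 1$ are integers, $r=\lfloor(\kappa-2)/2\rfloor$, $r'=\lceil(\kappa-2)/2\rceil$, $F$ a field, and $p=(p_m)_{m\in\mathbb Z}$, $q=(q_m)_{m\in\mathbb Z}$ are $n$-periodic sequences in $F$. $Y:\{(i,j,k)\in\mathbb Z^3:i+j+k \text{ even}\}\to F\setminus\{0,-1\}$ satisfies the $Y$-system $Y_{i,j,k+1}Y_{i,j,k-1}=\frac{(1+Y_{i+1,j,k})(1+Y_{i-1,j,k})}{(1+Y_{i,j+1,k}^{-1})(1+Y_{i,j-1,k}^{-1})}$ for all $(i,j,k)$ with $i+j+k$ odd, together with the stated initial conditions at $k=-1$ and $k=0$. *)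

(* Defs.v *)
From HB Require Import structures.
From mathcomp Require Import all_boot all_order all_algebra.
Set Implicit Arguments. Unset Strict Implicit. Unset Printing Implicit Defensive.
Import Order.TTheory GRing.Theory Num.Theory.
Local Open Scope ring_scope.

Definition rr (kappa : int) : int := ((kappa - 2) %/ 2)%Z.
Definition rr' (kappa : int) : int := kappa - 2 - rr kappa.

Definition evenz (x : int) : bool := (2 %| x)%Z.

Definition Ysystem (F : fieldType) (Y : int -> int -> int -> F) : Prop :=
  forall i j k : int, ~~ evenz (i + j + k) ->
    Y i j (k + 1) * Y i j (k - 1) =
    ((1 + Y (i + 1) j k) * (1 + Y (i - 1) j k)) /
    ((1 + (Y i (j + 1) k)^-1) * (1 + (Y i (j - 1) k)^-1)).

(* Main.v *)
Require Import Defs.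
From HB Require Import structures.
From mathcomp Require Import all_boot all_order all_algebra.
From mathcomp Require Import zify ring.
Import Order.TTheory GRing.Theory Num.Theory.
Local Open Scope ring_scope.

Lemma int_ind2 (Z : int -> Prop) :
  Z (-1) -> Z 0 ->
  (forall k, Z (k - 1) -> Z k -> Z (k + 1)) ->
  (forall k, Z k -> Z (k + 1) -> Z (k - 1)) ->
  forall k, Z k.
Proof.
move=> Hm1 H0 Hf Hb.
have P : forall m : nat, (Z (m%:Z) /\ Z (m%:Z - 1)) /\ (Z (- m%:Z) /\ Z (- m%:Z - 1)).
  elim=> [|m [[A B] [C D]]]; first by rewrite oppr0 sub0r.
  split; split.
  - have := Hf _ B A. by rewrite -addn1 PoszD.
  - by rewrite -addn1 PoszD addrK.
  - by rewrite -addn1 PoszD opprD.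
  - have := Hb (- m%:Z - 1). rewrite subrK => /(_ D C).
    by rewrite -addn1 PoszD opprD.
move=> [m|m].
- by case: (P m) => [[]].
- have -> : Negz m = - m%:Z - 1 by rewrite NegzE; lia.
  by case: (P m) => _ [].
Qed.

Lemma Yuniq (F : fieldType) (Y1 Y2 : int -> int -> int -> F) :
  (forall i j k : int, evenz (i + j + k) -> Y1 i j k != 0) ->
  (forall i j k : int, evenz (i + j + k) -> Y2 i j k != 0) ->
  Ysystem Y1 -> Ysystem Y2 ->
  (forall i j, ~~ evenz (i + j) -> Y1 i j (-1) = Y2 i j (-1)) ->
  (forall i j, evenz (i + j) -> Y1 i j 0 = Y2 i j 0) ->
  forall k i j, evenz (i + j + k) -> Y1 i j k = Y2 i j k.
Proof.
move=> N1 N2 S1 S2 Im1 I0.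
apply: int_ind2.
- move=> i j; rewrite /evenz => h; apply: Im1; rewrite /evenz; lia.
- move=> i j; rewrite addr0; exact: I0.
- move=> k A B i j h.
  have ho : ~~ evenz (i + j + k) by move: h; rewrite /evenz; lia.
  have e1 := S1 i j k ho. have e2 := S2 i j k ho.
  have hm : evenz (i + j + (k - 1)) by move: h; rewrite /evenz; lia.
  have nz := N1 _ _ _ hm.
  rewrite -(A _ _ hm) in e2.
  rewrite -!B in e2; try (rewrite /evenz; move: h; rewrite /evenz; lia).
  rewrite -e2 in e1. by move/(mulIf nz): e1.
- move=> k A B i j h.
  have ho : ~~ evenz (i + j + k) by move: h; rewrite /evenz; lia.
  have e1 := S1 i j k ho. have e2 := S2 i j k ho.
  have hm : evenz (i + j + (k + 1)) by move: h; rewrite /evenz; lia.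
  have nz := N1 _ _ _ hm.
  rewrite -(B _ _ hm) in e2.
  rewrite -!A in e2; try (rewrite /evenz; move: h; rewrite /evenz; lia).
  rewrite -e2 in e1. by move/(mulfI nz): e1.
Qed.

Lemma perm_mult (F : Type) (p : int -> F) (n : int) :
  (forall m, p (m + n) = p m) -> forall c m, p (m + c * n) = p m.
Proof.
move=> H.
have Hn : forall k : nat, forall m, p (m + k%:Z * n) = p m.
  elim=> [|k IH] m; first by rewrite mul0r addr0.
  by rewrite -addn1 PoszD mulrDl mul1r addrA H IH.
move=> [k|k] m; first exact: Hn.
rewrite NegzE mulNr.
by rewrite -[in RHS](subrK (k.+1%:Z * n) m) Hn.
Qed.

Theorem mainTheorem2 (F : fieldType) (kappa n : int)
  (p q : int -> F) (Y : int -> int -> int -> F) :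
  3 <= kappa -> 1 <= n ->
  (forall m : int, p (m + n) = p m) ->
  (forall m : int, q (m + n) = q m) ->
  (forall i j k : int, evenz (i + j + k) -> Y i j k != 0 /\ Y i j k != -1) ->
  Ysystem Y ->
  (forall i j : int, ~~ evenz (i + j) ->
     Y i j (-1) = (q ((((kappa - 2) * i + kappa * j + rr kappa - rr' kappa) %/ 2)%Z))^-1) ->
  (forall i j : int, evenz (i + j) ->
     Y i j 0 = p ((((kappa - 2) * i + kappa * j) %/ 2)%Z)) ->
  forall i j k : int, evenz (i + j + k) ->
  forall alpha beta : int,
    Y i j k = Y (i + alpha * kappa + beta * n) (j + alpha * (2 - kappa) - beta * n) k.
Proof.
move=> _ _ Hp Hq NZ S Im1 I0 i j k h alpha beta.
set a := alpha * kappa + beta * n.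
set b := alpha * (2 - kappa) - beta * n.
have ab : a + b = alpha * 2 by rewrite /a /b; ring.
have par : forall x y z, evenz (x + y + z) = evenz (x + a + (y + b) + z).
  move=> x y z. have -> : x + a + (y + b) + z = x + y + z + alpha * 2.
    by rewrite -ab; ring.
  rewrite /evenz; lia.
have -> : i + alpha * kappa + beta * n = i + a by rewrite /a addrA.
have -> : j + alpha * (2 - kappa) - beta * n = j + b by rewrite /b addrA.
pose Y2 := fun x y z => Y (x + a) (y + b) z.
have lin : forall x y, (kappa - 2) * (x + a) + kappa * (y + b)
   = ((- beta) * n) * 2 + ((kappa - 2) * x + kappa * y).
  by move=> x y; rewrite /a /b; ring.
have lin2 : forall x y, (kappa - 2) * (x + a) + kappa * (y + b) + rr kappa - rr' kappa
   = ((- beta) * n) * 2 + ((kappa - 2) * x + kappa * y + rr kappa - rr' kappa).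
  by move=> x y; rewrite /a /b; ring.
change (Y i j k = Y2 i j k); move: k i j h; apply: (@Yuniq F Y Y2).
- by move=> x y z hh; case: (NZ _ _ _ hh).
- by move=> x y z hh; case: (NZ (x + a) (y + b) z); rewrite // -par.
- exact: S.
- move=> x y z hh.
  rewrite /Y2 (S (x + a) (y + b) z); last by rewrite -par.
  by rewrite (addrAC x 1) (addrAC x (-1)) (addrAC y 1) (addrAC y (-1)).
- move=> x y hh. rewrite /Y2 Im1 ?Im1 //; last first.
    by rewrite -[x + a + (y + b)]addr0 -par addr0.
  rewrite lin2 divzMDl // (addrC (- beta * n)).
  by rewrite (@perm_mult _ _ _ Hq).
- move=> x y hh. rewrite /Y2 I0 ?I0 //; last first.
    by rewrite -[x + a + (y + b)]addr0 -par addr0.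
  rewrite lin divzMDl // (addrC (- beta * n)).
  by rewrite (@perm_mult _ _ _ Hp).
Qed.
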